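(* Let $(E,\mathcal{I}_1),\dots,(E,\mathcal{I}_k)$ be matroids on a common finite ground set $E$ with $|E|=\sum_{i\in[k]}\mathrm{rank}(\mathcal{I}_i)$, let $w_i:E\to\mathbb{R}_+$ be weights, and let $\mathrm{Op}^{(1)},\mathrm{Op}^{(2)}\in\{\max,\min,\sum\}$. Let $w^{\max}=\max_{i\in[k]}\max_{e\in E}w_i(e)$, define $\widetilde{\min}=\max$, $\widetilde{\max}=\min$, $\widetilde{\sum}=\sum$, and define $w_i'(e)=\frac{|E|}{\mathrm{rank}(\mathcal{I}_i)}w^{\max}-w_i(e)$ if $\mathrm{Op}^{(1)}\in\{\min,\max\}$ and $\mathrm{Op}^{(2)}=\sum$, and $w_i'(e)=w^{\max}-w_i(e)$ otherwise. Then a feasible partition $(I_1,\dots,I_k)$ of $E$ is an optimal solution of the minimum $(\mathrm{Op}^{(1)},\mathrm{Op}^{(2)})$-value matroid partitioning problem for $(E,(\mathcal{I}_i,w_i)_{i\in[k]})$ if and only if it is an optimal solution of the maximum $(\widetilde{\mathrm{Op}^{(1)}},\widetilde{\mathrm{Op}^{(2)}})$-value matroid partitioning problem for $(E,(\mathcal{I}_i,w_i')_{i\in[k]})$.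
   Context: A feasible partition of $E$ with respect to matroids $(E,\mathcal{I}_i)$, $i\in[k]$, is a tuple $(I_1,\dots,I_k)$ of pairwise disjoint nonempty sets with $\bigcup_i I_i=E$ and $I_i\in\mathcal{I}_i$. The $(\mathrm{Op}^{(1)},\mathrm{Op}^{(2)})$-value of $(I_1,\dots,I_k)$ is $\mathrm{Op}^{(1)}_{i\in[k]}\mathrm{Op}^{(2)}_{e\in I_i}w_i(e)$. The minimum (resp. maximum) $(\mathrm{Op}^{(1)},\mathrm{Op}^{(2)})$-value matroid partitioning problem asks for a feasible partition minimizing (resp. maximizing) this value. Under $|E|=\sum_i\mathrm{rank}(\mathcal{I}_i)$ every feasible partition consists of bases. *)

(* Defs.v *)
From HB Require Import structures.
From mathcomp Require Import all_boot all_order all_algebra.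
Set Implicit Arguments. Unset Strict Implicit. Unset Printing Implicit Defensive.
Import Order.TTheory GRing.Theory Num.Theory.
Local Open Scope ring_scope.

Definition is_matroid (E : finType) (F : {set {set E}}) : Prop :=
  [/\ set0 \in F,
      (forall A B : {set E}, B \in F -> A \subset B -> A \in F) &
      (forall A B : {set E}, A \in F -> B \in F -> (#|A| < #|B|)%N ->
         exists2 e, e \in B :\: A & e |: A \in F)].

Definition mrank (E : finType) (F : {set {set E}}) : nat :=
  \max_(A in F) #|A|.

Inductive Op := OpMax | OpMin | OpSum.

Definition op_tilde (o : Op) : Op :=
  match o with OpMax => OpMin | OpMin => OpMax | OpSum => OpSum end.

(* Applying Op to a finite (multi)set of reals, given as a sequence.
   max / min are only used on nonempty sequences (the value on [::] is 0). *)
Definition applyOp (R : realFieldType) (o : Op) (s : seq R) : R :=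
  match o with
  | OpSum => \sum_(x <- s) x
  | OpMax => match s with [::] => 0 | x :: t => \big[Num.max/x]_(y <- t) y end
  | OpMin => match s with [::] => 0 | x :: t => \big[Num.min/x]_(y <- t) y end
  end.

Definition feasible_partition (E : finType) (k : nat)
    (M : 'I_k -> {set {set E}}) (P : 'I_k -> {set E}) : Prop :=
  [/\ (forall i j, i != j -> [disjoint P i & P j]),
      (forall i, P i != set0),
      \bigcup_(i < k) P i = [set: E] &
      (forall i, P i \in M i)].

Definition op_value (R : realFieldType) (E : finType) (k : nat)
    (w : 'I_k -> E -> R) (o1 o2 : Op) (P : 'I_k -> {set E}) : R :=
  applyOp o1 [seq applyOp o2 [seq w i e | e <- enum (P i)] | i <- enum 'I_k].

Definition optimal_min (R : realFieldType) (E : finType) (k : nat)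
    (M : 'I_k -> {set {set E}}) (w : 'I_k -> E -> R) (o1 o2 : Op)
    (P : 'I_k -> {set E}) : Prop :=
  feasible_partition M P /\
  forall Q, feasible_partition M Q -> op_value w o1 o2 P <= op_value w o1 o2 Q.

Definition optimal_max (R : realFieldType) (E : finType) (k : nat)
    (M : 'I_k -> {set {set E}}) (w : 'I_k -> E -> R) (o1 o2 : Op)
    (P : 'I_k -> {set E}) : Prop :=
  feasible_partition M P /\
  forall Q, feasible_partition M Q -> op_value w o1 o2 Q <= op_value w o1 o2 P.

(* w^max = max_i max_e w_i(e)  (weights are nonnegative, so 0 is a neutral seed) *)
Definition wmax (R : realFieldType) (E : finType) (k : nat) (w : 'I_k -> E -> R) : R :=
  \big[Num.max/0]_(i < k) \big[Num.max/0]_(e : E) w i e.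

Definition is_minmax (o : Op) : bool :=
  match o with OpSum => false | _ => true end.

Definition wprime (R : realFieldType) (E : finType) (k : nat)
    (M : 'I_k -> {set {set E}}) (w : 'I_k -> E -> R) (o1 o2 : Op)
    (i : 'I_k) (e : E) : R :=
  if is_minmax o1 && ~~ is_minmax o2 then
    (#|E|%:R / (mrank (M i))%:R) * wmax w - w i e
  else wmax w - w i e.

(* Main.v *)
Require Import Defs.
From HB Require Import structures.
From mathcomp Require Import all_boot all_order all_algebra.
From mathcomp Require Import zify ring.
Import Order.TTheory GRing.Theory Num.Theory.
Local Open Scope ring_scope.

Lemma card_part (E : finType) (k : nat) (M : 'I_k -> {set {set E}}) P :
  feasible_partition M P -> (\sum_(i < k) #|P i|)%N = #|E|.
Proof.
case=> dis _ cov _.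
have -> : (\sum_(i < k) #|P i| = \sum_(i < k) \sum_(e : E) (e \in P i))%N.
  by apply: eq_bigr => i _; rewrite -sum1_card big_mkcond /=; apply: eq_bigr => e _; case: (e \in P i).
rewrite exchange_big /= -sum1_card; apply: eq_bigr => e _.
have : e \in \bigcup_(i < k) P i by rewrite cov inE.
case/bigcupP => j _ ej.
rewrite (bigD1 j) //= ej big1 // => i ij.
apply/eqP; rewrite eqb0; apply/negP => ei.
by move: (dis _ _ ij); rewrite disjoint_sym => /disjointFr /(_ ej); rewrite ei.
Qed.

Lemma card_base (E : finType) (k : nat) (M : 'I_k -> {set {set E}}) P :
  #|E| = (\sum_(i < k) mrank (M i))%N ->
  feasible_partition M P -> forall i, #|P i| = mrank (M i).
Proof.
move=> hE fP i.
have le j : (#|P j| <= mrank (M j))%N.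
  by case: fP => _ _ _ /(_ j) hj; rewrite /mrank (bigD1 (P j)) //= leq_maxl.
have := @card_part _ _ _ _ fP; rewrite hE (bigD1 i) //= [X in _ = X](bigD1 i) //= => h.
have : (\sum_(j < k | j != i) #|P j| <= \sum_(j < k | j != i) mrank (M j))%N.
  by apply: leq_sum => j _; apply: le.
move: (le i) h => ? ; set a := (\sum_(j < k | j != i) #|P j|)%N; set b := (\sum_(j < k | j != i) mrank (M j))%N; move=> h ?; lia.
Qed.

Lemma maxB (R : realFieldType) (c a b : R) : Num.max (c - a) (c - b) = c - Num.min a b.
Proof. by rewrite oppr_min addr_maxr. Qed.
Lemma minB (R : realFieldType) (c a b : R) : Num.min (c - a) (c - b) = c - Num.max a b.
Proof. by rewrite oppr_max addr_minr. Qed.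

Lemma tildeL (R : realFieldType) o (c : R) s : (o = OpSum \/ s != [::]) ->
  applyOp (op_tilde o) [seq c - x | x <- s] =
  (if o is OpSum then (size s)%:R * c else c) - applyOp o s.
Proof.
case: o => /= h.
- case: s h => [[//|//]|x t _] /=; elim: t x => [|y t IH] x; first by rewrite !big_nil.
  by rewrite /= !big_cons IH minB.
- case: s h => [[//|//]|x t _] /=; elim: t x => [|y t IH] x; first by rewrite !big_nil.
  by rewrite /= !big_cons IH maxB.
- rewrite big_map; elim: s {h} => [|x s IH]; first by rewrite !big_nil mul0r subr0.
  rewrite !big_cons IH /= -addn1 natrD mulrDl mul1r; ring.
Qed.

Lemma inner (R : realFieldType) (E : finType) (k : nat)
    (M : 'I_k -> {set {set E}}) (w : 'I_k -> E -> R) (o1 o2 : Op) Q :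
  #|E| = (\sum_(i < k) mrank (M i))%N -> feasible_partition M Q -> forall i,
  applyOp (op_tilde o2) [seq wprime M w o1 o2 i e | e <- enum (Q i)] =
  (if o2 is OpSum then (if is_minmax o1 then #|E|%:R * wmax w else (mrank (M i))%:R * wmax w) else wmax w)
   - applyOp o2 [seq w i e | e <- enum (Q i)].
Proof.
move=> hE fQ i.
have hc := @card_base _ _ _ _ hE fQ i.
have ne : Q i != set0 by case: fQ.
have r0 : (mrank (M i))%:R != 0 :> R by rewrite pnatr_eq0 -hc -lt0n card_gt0.
set c := if is_minmax o1 && ~~ is_minmax o2 then #|E|%:R / (mrank (M i))%:R * wmax w else wmax w.
have -> : [seq wprime M w o1 o2 i e | e <- enum (Q i)] = [seq c - x | x <- [seq w i e | e <- enum (Q i)]].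
  by elim: (enum (Q i)) => // e s IH /=; rewrite IH /wprime /c; case: ifP.
rewrite tildeL; last first.
  by right; rewrite -size_eq0 size_map -cardE -lt0n card_gt0.
rewrite size_map -cardE hc /c.
by rewrite {}/c; case: o1; case: o2 => //=; rewrite mulrA mulrCA divff // mulr1.
Qed.

Lemma outer (R : realFieldType) (I : eqType) o (d : I -> R) (y : I -> R) s (d0 : R) :
  (o = OpSum \/ forall i, d i = d0) ->
  applyOp (op_tilde o) [seq d i - y i | i <- s] =
  (if o is OpSum then \sum_(i <- s) d i else if s is [::] then 0 else d0) - applyOp o [seq y i | i <- s].
Proof.
case: o => h; last by rewrite /= !big_map sumrB.
- case: h => // hd; case: s => [|x s]; first by rewrite subr0.
  have -> : [seq d i - y i | i <- x :: s] = [seq d0 - z | z <- [seq y i | i <- x :: s]].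
    by rewrite -map_comp; apply: eq_map => i /=; rewrite hd.
  by rewrite (@tildeL _ OpMax); last by right.
- case: h => // hd; case: s => [|x s]; first by rewrite subr0.
  have -> : [seq d i - y i | i <- x :: s] = [seq d0 - z | z <- [seq y i | i <- x :: s]].
    by rewrite -map_comp; apply: eq_map => i /=; rewrite hd.
  by rewrite (@tildeL _ OpMin); last by right.
Qed.

Lemma key (R : realFieldType) (E : finType) (k : nat)
    (M : 'I_k -> {set {set E}}) (w : 'I_k -> E -> R) (o1 o2 : Op) :
  #|E| = (\sum_(i < k) mrank (M i))%N ->
  exists c, forall Q, feasible_partition M Q ->
    op_value (wprime M w o1 o2) (op_tilde o1) (op_tilde o2) Q = c - op_value w o1 o2 Q.
Proof.
move=> hE.
pose d i := (if o2 is OpSum then (if is_minmax o1 then #|E|%:R * wmax w else (mrank (M i))%:R * wmax w) else wmax w).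
pose d0 := if o2 is OpSum then #|E|%:R * wmax w else wmax w.
exists (if o1 is OpSum then \sum_(i <- enum 'I_k) d i else if enum 'I_k is [::] then 0 else d0).
move=> Q fQ; rewrite /op_value.
have -> : [seq applyOp (op_tilde o2) [seq wprime M w o1 o2 i e | e <- enum (Q i)] | i <- enum 'I_k]
  = [seq d i - applyOp o2 [seq w i e | e <- enum (Q i)] | i <- enum 'I_k].
  by apply: eq_map => i; rewrite (@inner _ _ _ _ _ _ _ _ hE fQ i).
rewrite (@outer _ _ o1 d _ _ d0) //.
by rewrite {}/d {}/d0; case: o1; [right|right|left] => //= i.
Qed.

Theorem mainTheorem2 (R : realFieldType) (E : finType) (k : nat)
    (M : 'I_k -> {set {set E}}) (w : 'I_k -> E -> R) (o1 o2 : Op) :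
  (forall i, is_matroid (M i)) ->
  #|E| = (\sum_(i < k) mrank (M i))%N ->
  (forall i e, 0 <= w i e) ->
  forall P : 'I_k -> {set E},
    optimal_min M w o1 o2 P <->
    optimal_max M (wprime M w o1 o2) (op_tilde o1) (op_tilde o2) P.
Proof.
move=> _ hE _ P; have [c hc] := @key _ _ _ M w o1 o2 hE.
split=> -[fP h]; split=> // Q fQ.
- by rewrite (hc _ fP) (hc _ fQ) lerD2l lerN2 h.
- by move: (h _ fQ); rewrite (hc _ fP) (hc _ fQ) lerD2l lerN2.
Qed.
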